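(* Consider the sparse sequence model and the weights $\phi_i$ described in the context, with $\lambda_n = O(n^{-(a+1)})$ as $n\to\infty$ for a constant $a>0$, and with $\alpha<2T$. Writing $S^\star = S_{\theta^\star}$, \[ \sum_{i=1}^n \mathsf{E}_{\theta_i^\star}\phi_i \le |S^\star| + o(1) \lesssim |S^\star|, \] where the $o(1)$ term is bounded by a quantity not depending on $\theta^\star$ that tends to $0$ as $n\to\infty$.
   Context: Model: one observes $Y_i = \theta_i + Z_i$, $i=1,\ldots,n$, where $\theta\in\mathbb{R}^n$ is unknown and $Z_1,\ldots,Z_n$ are iid copies of a random variable $Z$ with fully known distribution, mean zero, and subgaussian in the sense that $\mathsf{E}\exp(tZ) \le \exp(\sigma^2 t^2/2)$ for all $t\in\mathbb{R}$, for a known constant $\sigma>0$. $T>0$ denotes the upper endpoint of the interval on which the moment generating function of $(Z/\sigma)^2$ exists, i.e. $\mathsf{E} e^{t (Z/\sigma)^2}$ is finite (bounded by a constant) for $t\in(0,T]$. $\mathsf{E}_{\theta_i^\star}$ denotes expectation when $Y_i$ has mean $\theta_i^\star$. For $\theta\in\mathbb{R}^n$, $S_\theta=\{i:\theta_i\neq 0\}$. Weights: fix constants $\alpha\in(0,1)$, $\gamma>0$ and a sequence $\lambda_n\in(0,1)$, and define $\phi_i\in(0,1)$ by $\operatorname{logit}(\phi_i) = \operatorname{logit}(\lambda_n) + \tfrac12\log\tfrac{\gamma}{\alpha+\gamma} + \tfrac{\alpha}{2\sigma^2} Y_i^2$, with $\operatorname{logit}(p)=\log\{p/(1-p)\}$.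 *)

(* Defs.v *)
From HB Require Import structures.
From mathcomp Require Import all_boot all_order all_algebra.
From mathcomp Require Import all_classical all_reals all_analysis.
Set Implicit Arguments. Unset Strict Implicit. Unset Printing Implicit Defensive.
Import Order.TTheory GRing.Theory Num.Theory.
Local Open Scope ring_scope.

Definition logit {R : realType} (p : R) : R := ln (p / (1 - p)).

Definition expit {R : realType} (x : R) : R := (1 + expR (- x))^-1.

Definition phi_weight {R : realType} (lambda alpha gamma sigma y : R) : R :=
  expit (logit lambda + 2^-1 * ln (gamma / (alpha + gamma))
         + alpha / (2 * sigma ^+ 2) * y ^+ 2).

(* Main.v *)
Require Import Defs.
From HB Require Import structures.
From mathcomp Require Import all_boot all_order all_algebra.
From mathcomp Require Import all_classical all_reals all_analysis.
From mathcomp Require Import ring lra.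
Import Order.TTheory GRing.Theory Num.Theory.
Import numFieldNormedType.Exports.
Local Open Scope classical_set_scope.
Local Open Scope ring_scope.

Section helpers.
Variable R : realType.

Lemma expit_ge0 (x : R) : 0 <= expit x.
Proof. by rewrite /expit invr_ge0 addr_ge0 // expR_ge0. Qed.

Lemma expit_le1 (x : R) : expit x <= 1.
Proof.
rewrite /expit invf_le1 ?ltr_pwDr ?expR_gt0 //.
by rewrite lerDl expR_ge0.
Qed.

Lemma expit_bound (l b : R) : 0 < l < 1 ->
  expit (logit l + b) <= l * (expR b + 1).
Proof.
move=> /andP[l0 l1].
have q0 : 0 < l / (1 - l) by rewrite divr_gt0 // subr_gt0.
set E := expR b.
have E0 : 0 < E := expR_gt0 b.
rewrite /expit /logit opprD expRD !expRN lnK ?posrE // -/E.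
have -> : 1 + (l / (1 - l))^-1 * E^-1 = (l * E + 1 - l) / (l * E).
  by field; rewrite ?gt_eqF ?subr_gt0 //; apply/andP; split; rewrite gt_eqF.
have D0 : 0 < l * E + 1 - l by nra.
rewrite invf_div ler_pdivrMr //.
nra.
Qed.

Lemma expit_cont : continuous (@expit R).
Proof.
move=> x; rewrite /expit.
apply: cvgV; first by rewrite gt_eqF // ltr_pwDr ?expR_gt0.
apply: cvgD; first exact: cvg_cst.
apply: (@cvg_comp _ _ _ (fun x : R => - x) expR _ (nbhs (- x))).
  exact: cvgN cvg_id.
exact: continuous_expR.
Qed.

Lemma phi_weight_cont (l al g s : R) : continuous (fun y : R => phi_weight l al g s y).
Proof.
move=> y; rewrite /phi_weight.
apply: (@cvg_comp _ _ _ (fun y : R => logit l + 2^-1 * ln (g / (al + g)) + al / (2 * s ^+ 2) * y ^+ 2) expit _ (nbhs _)); last exact: expit_cont.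
apply: cvgD; first exact: cvg_cst.
apply: cvgM; first exact: cvg_cst.
exact: exprn_continuous.
Qed.

Lemma cvg_lnn (a : R) : 0 < a -> (a * ln (n%:R : R)) @[n --> \oo] --> +oo.
Proof.
move=> a0; apply/cvgryPge => A.
near=> n.
have n0 : (0 : R) < n%:R.
  by apply: lt_le_trans (expR_gt0 (A / a)) _; near: n; exact: nbhs_infty_ger.
rewrite -ler_pdivrMl // -[X in X <= _]expRK ler_ln ?posrE ?expR_gt0 //.
rewrite mulrC; near: n; exact: nbhs_infty_ger.
Unshelve. all: end_near. Qed.

Lemma cvg_npow (a : R) : 0 < a -> expR (- (a * ln (n%:R : R))) @[n --> \oo] --> 0.
Proof.
move=> a0.
apply: (@cvg_comp _ _ _ (fun n : nat => a * ln (n%:R : R)) (fun x => expR (- x)) _ (pinfty_nbhs R)).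
  exact: cvg_lnn.
exact: cvgr_expR.
Qed.
End helpers.

Theorem lemma1 (d : measure_display) (Ω : measurableType d) (R : realType)
  (P : probability Ω R) (Z : {RV P >-> R}) (sigma T alpha gamma a : R)
  (lambda : nat -> R) :
  (* noise: mean zero, subgaussian with known sigma > 0 *)
  0 < sigma ->
  ('E_P[Z] = 0)%E ->
  (forall t : R, ('E_P[fun w => expR (t * Z w)] <= (expR (sigma ^+ 2 * t ^+ 2 / 2))%:E)%E) ->
  (* the MGF of (Z/sigma)^2 is finite on (0, T] *)
  0 < T ->
  (forall t : R, 0 < t <= T ->
     ('E_P[fun w => expR (t * (Z w / sigma) ^+ 2)] < +oo)%E) ->
  (* constants of the weights *)
  0 < alpha < 1 -> 0 < gamma ->
  alpha < 2 * T ->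
  (* lambda_n in (0,1) and lambda_n = O(n^{-(a+1)}) *)
  0 < a ->
  (forall n, 0 < lambda n < 1) ->
  (exists C : R, 0 < C /\
     \forall n \near \oo, lambda n <= C * (n%:R `^ (- (a + 1)))) ->
  exists eps : nat -> R, eps @ \oo --> 0 /\
    forall (n : nat) (theta : 'I_n -> R),
      (\sum_(i < n)
          'E_P[fun w => phi_weight (lambda n) alpha gamma sigma (theta i + Z w)]
        <= (#|[pred i : 'I_n | theta i != 0]|%:R + eps n)%:E)%E.
Proof.
move=> s0 _ _ T0 hmgf /andP[al0 al1] g0 alT a0 hl [C [C0 hC]].
set t := alpha / 2.
have ht : 0 < t <= T by apply/andP; split; rewrite /t; lra.
set g := fun w => expR (t * (Z w / sigma) ^+ 2).
have mZ : measurable_fun setT Z by exact: measurable_funPT.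
have mg : measurable_fun setT g.
  apply: (@measurableT_comp _ _ _ _ _ _ (fun x : R => expR (t * (x / sigma) ^+ 2)) _ Z) => //.
  apply: measurable_realfun.continuous_measurable_fun => x.
  apply: (@cvg_comp _ _ _ (fun x : R => t * (x / sigma) ^+ 2) expR _ (nbhs _)); last exact: continuous_expR.
  apply: cvgM; first exact: cvg_cst.
  apply: (@cvg_comp _ _ _ (fun x : R => x / sigma) (fun x => x ^+ 2) _ (nbhs _)); last exact: exprn_continuous.
  by apply: cvgM; [exact: cvg_id | exact: cvg_cst].
have Eg0 : (0 <= 'E_P[g])%E by apply: expectation_ge0 => w; exact: expR_ge0.
have Egfin : ('E_P[g] \is a fin_num)%E by rewrite ge0_fin_numE //; exact: hmgf.
set K := fine ('E_P[g])%E.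
have EgK : ('E_P[g] = K%:E)%E by rewrite fineK.
have K0 : 0 <= K by rewrite -lee_fin -EgK.
set A := expR (2^-1 * ln (gamma / (alpha + gamma))).
have A0 : 0 < A := expR_gt0 _.
set M := A * K + 1.
have M0 : 0 < M by rewrite /M; apply: ltr_pwDr => //; exact: mulr_ge0 (ltW A0) K0.
exists (fun n => n%:R * (lambda n * M)); split.
  apply: (@squeeze_cvgr _ _ _ _ (cst 0) (fun n => C * M * expR (- (a * ln (n%:R : R))))); last first.
  - by rewrite -(mulr0 (C * M)); apply: cvgM; [exact: cvg_cst | exact: cvg_npow].
  - exact: cvg_cst.
  near=> n.
  have hCn : lambda n <= C * (n%:R `^ (- (a + 1))) by near: n; exact: hC.
  have n0 : (0 : R) < n%:R.
    by apply: lt_le_trans (ltr01) _; near: n; exact: nbhs_infty_ger.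
  have l0 := hl n; move/andP: l0 => [l0 _].
  apply/andP; split.
    by rewrite /cst; apply: mulr_ge0 (ltW n0) (mulr_ge0 (ltW l0) (ltW M0)).
  have e : n%:R * (C * (n%:R `^ (- (a + 1)))) = C * expR (- (a * ln (n%:R : R))).
    rewrite /powR gt_eqF // (_ : - (a + 1) * ln (n%:R : R) = - (a * ln (n%:R : R)) + - ln (n%:R : R)); last by ring.
    rewrite expRD (expRN (ln _)) lnK ?posrE //; field.
    by rewrite gt_eqF.
  rewrite -mulrA (mulrC M) mulrA mulrA -e; apply: ler_wpM2r; first exact: ltW.
  by apply: ler_wpM2l; first exact: ltW.
move=> n theta.
have mphi (c : R) : measurable_fun setT (fun w => phi_weight (lambda n) alpha gamma sigma (c + Z w)).
  apply: (@measurableT_comp _ _ _ _ _ _ (fun x : R => phi_weight (lambda n) alpha gamma sigma (c + x)) _ Z) => //.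
  apply: measurable_realfun.continuous_measurable_fun => x.
  apply: (@cvg_comp _ _ _ (fun x : R => c + x) _ _ (nbhs _)); last exact: phi_weight_cont.
  by apply: cvgD; [exact: cvg_cst | exact: cvg_id].
have Ele (f1 f2 : Ω -> R) : measurable_fun setT f1 -> measurable_fun setT f2 ->
    (forall w, 0 <= f1 w) -> (forall w, f1 w <= f2 w) -> ('E_P[f1] <= 'E_P[f2])%E.
  move=> m1 m2 p1 p12; rewrite !unlock; apply: ge0_le_integral => //.
  - by move=> w _; rewrite lee_fin.
  - exact/measurable_realfun.measurable_EFinP.
  - exact/measurable_realfun.measurable_EFinP.
  - by move=> w _; rewrite lee_fin.
apply: (@le_trans _ _ (\sum_(i < n) ((theta i != 0)%:R + lambda n * M)%:E)%E).
  apply: lee_sum => i _.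
  have [->|th0] := eqVneq (theta i) 0.
    apply: (@le_trans _ _ ('E_P[fun w => (lambda n * (A * g w + 1))%R])%E).
      apply: Ele.
      - exact: mphi.
      - apply: (@measurableT_comp _ _ _ _ _ _ (fun x : R => lambda n * (A * x + 1)) _ g) => //.
        apply: measurable_realfun.continuous_measurable_fun => x.
        apply: cvgM; first exact: cvg_cst.
        apply: cvgD; last exact: cvg_cst.
        by apply: cvgM; [exact: cvg_cst | exact: cvg_id].
      - by move=> w; exact: expit_ge0.
      - move=> w; rewrite /phi_weight -addrA.
        apply: le_trans (@expit_bound R _ _ (hl n)) _.
        rewrite expRD /A /g add0r.
        have -> : alpha / (2 * sigma ^+ 2) * Z w ^+ 2 = t * (Z w / sigma) ^+ 2.
          by rewrite /t; field; rewrite gt_eqF.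
        by [].
    have -> : ('E_P[fun w => (lambda n * (A * g w + 1))%R] = (lambda n * A)%:E * 'E_P[g] + (lambda n)%:E)%E.
      rewrite !unlock.
      have -> : (fun w => (lambda n * (A * g w + 1))%:E) = (fun w => (lambda n * A)%:E * (g w)%:E + (lambda n)%:E)%E.
        by apply/funext => w; rewrite -EFinM -EFinD; congr EFin; ring.
      have l0 := hl n; move/andP: l0 => [l0 _].
      rewrite ge0_integralD //.
      - rewrite ge0_integralZl //.
        + rewrite integral_cst //.
          congr (_ + _)%E; rewrite -[RHS]mule1; congr (_ * _)%E.
          exact: probability_setT.
        + exact/measurable_realfun.measurable_EFinP.
        + by move=> w _; rewrite lee_fin expR_ge0.
        + by rewrite lee_fin; apply: mulr_ge0 (ltW l0) (ltW A0).
      - by move=> w _; apply: mule_ge0; rewrite lee_fin ?expR_ge0 //; apply: mulr_ge0 (ltW l0) (ltW A0).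
      - apply: emeasurable_funM; first exact: measurable_cst.
        exact/measurable_realfun.measurable_EFinP.
      - by move=> w _; rewrite lee_fin ltW.
    rewrite EgK.
    rewrite /= add0r -EFinM -EFinD lee_fin /M.
    by rewrite mulrDr mulr1 mulrA.
    apply: (@le_trans _ _ ('E_P[cst 1%R])%E).
      apply: Ele.
      - exact: mphi.
      - exact: measurable_cst.
      - by move=> w; exact: expit_ge0.
      - by move=> w; exact: expit_le1.
    have l0 := hl n; move/andP: l0 => [l0 _].
    rewrite expectation_cst lee_fin /= lerDl.
    exact: mulr_ge0 (ltW l0) (ltW M0).
  rewrite sumEFin lee_fin big_split /= sumr_const card_ord.
  have -> : \sum_(i < n) ((theta i != 0)%:R : R) = #|[pred i | theta i != 0]|%:R.
    rewrite -sumr_const [RHS]big_mkcond /=; apply: eq_bigr => i _.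
    by rewrite inE; case: (theta i != 0).
  by rewrite mulr_natl.
Unshelve. all: end_near. Qed.
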